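(* Let $f:\mathbb{Z}_2^\ell\to\mathbb{Z}_2^\ell$ be a randomized bitwise partitioned function, and let $x,z\in\mathbb{Z}_2^\ell$ be fixed bitstrings. Then $G(x,z,f(z)\vdash f(x))\ge 2^{-\Delta(x,z)}$, where $\Delta(x,z)=\#\{i\mid x_i\ne z_i\}$ is the Hamming distance.
   Context: A randomized boolean function $f:\mathbb{Z}_2^m\to\mathbb{Z}_2^n$ is partitioned if $m=m_1+\dots+m_k$, $n=n_1+\dots+n_k$ and $f=f_1::\dots::f_k$ (concatenation of outputs on the corresponding input blocks), with $f_i:\mathbb{Z}_2^{m_i}\to\mathbb{Z}_2^{n_i}$, such that each component is independent of the inputs and outputs of all other components: the advantage of $x_{\bar\imath},f_{\bar\imath}(x_{\bar\imath})$ for guessing $f_i(x_i)$ is zero, where $\bar\imath=\{j\ne i\}$. It is bitwise partitioned if $m=n=\ell$ and $m_i=n_i=1$ for all $i$. $G(\Xi\vdash\Theta)$ is the guessing chance: the maximal probability, over randomized guessing procedures, of outputting $\Theta$ from input $\Xi$, the probability taken over the randomness involved (here the randomness of $f$); advantage of $\Xi$ for $\Theta$ is $G(\Xi\vdash\Theta)-G(\emptyset\vdash\Theta)$. *)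

(* Defs.v *)
From HB Require Import structures.
From mathcomp Require Import all_boot all_order all_algebra.
From mathcomp Require Import classical_sets reals.
Set Implicit Arguments. Unset Strict Implicit. Unset Printing Implicit Defensive.
Import Order.TTheory GRing.Theory Num.Theory.
Local Open Scope ring_scope.
Local Open Scope classical_set_scope.

Definition bits (l : nat) := {ffun 'I_l -> bool}.

Definition is_distr {R : realType} {Om : finType} (P : {ffun Om -> R}) : Prop :=
  (forall w, 0 <= P w) /\ \sum_(w : Om) P w = 1.

Definition is_procedure {R : realType} {A B : finType} (q : {ffun A -> {ffun B -> R}}) : Prop :=
  (forall a b, 0 <= q a b) /\ (forall a, \sum_(b : B) q a b = 1).

Definition success {R : realType} {Om A B : finType} (P : {ffun Om -> R})
  (Xi : Om -> A) (Th : Om -> B) (q : {ffun A -> {ffun B -> R}}) : R :=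
  \sum_(w : Om) P w * q (Xi w) (Th w).

Definition guess_chance {R : realType} {Om A B : finType} (P : {ffun Om -> R})
  (Xi : Om -> A) (Th : Om -> B) : R :=
  sup [set r | exists q : {ffun A -> {ffun B -> R}}, is_procedure q /\ r = success P Xi Th q].

Definition advantage {R : realType} {Om A B : finType} (P : {ffun Om -> R})
  (Xi : Om -> A) (Th : Om -> B) : R :=
  guess_chance P Xi Th - guess_chance P (fun _ => tt) Th.

(* A randomized function Z_2^l -> Z_2^l is given by a finite probability
   space (Om, P) and f : Om -> bits l -> bits l.  It is bitwise partitioned if
   (1) f = f_1 :: ... :: f_l with f_i : Z_2 -> Z_2, i.e. (almost surely) output
       bit i depends only on input bit i, and
   (2) for every i and every input x, the advantage of (x_{-i}, f_{-i}(x_{-i}))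
       for guessing f_i(x_i) is zero.  The tuple indexed by the complement of i
       is encoded as an l-indexed tuple with None at position i. *)
Definition bitwise_partitioned {R : realType} {l : nat} {Om : finType}
  (P : {ffun Om -> R}) (f : Om -> bits l -> bits l) : Prop :=
  (forall w, 0 < P w -> forall (i : 'I_l) (u v : bits l), u i = v i -> f w u i = f w v i) /\
  (forall (i : 'I_l) (x : bits l),
     advantage P
       (fun w => [ffun j : 'I_l => if j == i then None else Some (x j, f w x j)])
       (fun w => f w x i) = 0).

Definition hamming {l : nat} (x z : bits l) : nat := #|[set i : 'I_l | x i != z i]|.

(* Main.v *)
Require Import Defs.
From HB Require Import structures.
From mathcomp Require Import all_boot all_order all_algebra.
From mathcomp Require Import classical_sets reals.
Import Order.TTheory GRing.Theory Num.Theory.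
Local Open Scope ring_scope.

Section Aux.
Variables (R : realType) (l : nat).

Definition Fq (a : bits l * bits l * bits l) (i : 'I_l) (j : bool) : R :=
  if a.1.1 i == a.1.2 i then (j == a.2 i)%:R else 2%:R^-1.

Definition qproc : {ffun (bits l * bits l * bits l) -> {ffun bits l -> R}} :=
  [ffun a => [ffun b : bits l => \prod_i Fq a i (b i)]].

Lemma Fq_ge0 a i j : 0 <= Fq a i j.
Proof. by rewrite /Fq; case: ifP => _; rewrite ?invr_ge0 ler0n. Qed.

Lemma Fq_sum a i : \sum_(j : bool) Fq a i j = 1.
Proof.
rewrite big_bool /Fq /=; case: ifP => _.
  by case: (a.2 i); rewrite /= ?addr0 ?add0r.
by rewrite -mulr2n -[_ *+ 2]mulr_natr mulVf // pnatr_eq0.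
Qed.

Lemma qproc_ok : is_procedure qproc.
Proof.
split.
  by move=> a b; rewrite !ffunE; apply: prodr_ge0 => i _; apply: Fq_ge0.
move=> a.
have -> : \sum_(b : bits l) qproc a b = \sum_(b : {ffun 'I_l -> bool}) \prod_i Fq a i (b i).
  by apply: eq_bigr => b _; rewrite !ffunE.
rewrite -bigA_distr_bigA /=.
by rewrite big1 // => i _; apply: Fq_sum.
Qed.
End Aux.

Theorem proposition5p2 (R : realType) (l : nat) (Om : finType)
  (P : {ffun Om -> R}) (f : Om -> bits l -> bits l) (x z : bits l) :
  is_distr P -> bitwise_partitioned P f ->
  (2%:R ^+ hamming x z)^-1 <= guess_chance P (fun w => (x, z, f w z)) (fun w => f w x).
Proof.
move=> [P0 P1] [Hf _].
set c := (2%:R ^+ hamming x z)^-1 : R.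
have Hs : success P (fun w => (x, z, f w z)) (fun w => f w x) (qproc R l) = c.
  rewrite /success.
  have -> : \sum_w P w * qproc R l (x, z, f w z) (f w x) = \sum_w P w * c.
    apply: eq_bigr => w _.
    have [->|Pw0] := eqVneq (P w) 0; first by rewrite !mul0r.
    have Pp : 0 < P w by rewrite lt0r Pw0 P0.
    congr (_ * _); rewrite !ffunE.
    have -> : \prod_i @Fq R l (x, z, f w z) i (f w x i)
        = \prod_i (if i \in [set i | x i != z i] then 2%:R^-1 else 1 : R).
      apply: eq_bigr => i _; rewrite /Fq /= inE.
      case: eqP => /= Hxz //.
      by rewrite (Hf w Pp i x z Hxz) eqxx.
    rewrite -big_mkcond /= prodr_const exprVn /c; congr (_ ^- _).
    apply: eq_card => i; rewrite inE; apply/idP/idP => H.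
      exact: (mem_set (H : (fun i => x i != z i) i)).
    exact: (set_mem H).
  by rewrite -mulr_suml P1 mul1r.
have ub : has_ubound [set r | exists q : {ffun (bits l * bits l * bits l) -> {ffun bits l -> R}},
    is_procedure q /\ r = success P (fun w => (x, z, f w z)) (fun w => f w x) q].
  exists 1 => r [q [[q0 q1] ->]].
  rewrite /success -P1; apply: ler_sum => w _.
  rewrite -[leRHS]mulr1; apply: ler_wpM2l => //.
  rewrite -(q1 (x, z, f w z)) (bigD1 (f w x)) //= lerDl.
  by apply: sumr_ge0.
rewrite /guess_chance; apply: ub_le_sup => //.
by exists (qproc R l); split; [apply: qproc_ok | rewrite Hs].
Qed.
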